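(* There exists a setting (with pairwise distinct budgets) in which the budget-oblivious second-price auction (BOSP) has no pure Nash equilibrium.
   Context: Setting: there are $k\ge 1$ slots with public click-through rates $\theta_1>\theta_2>\dots>\theta_k>0$, and $n\ge k$ players. Player $i$ has a private value per click $v_i\ge 0$ and a budget $B_i>0$; the budgets $B_1,\dots,B_n$ are pairwise distinct. A setting consists of $k,n,(\theta_j),(v_i),(B_i)$ together with a fixed strict priority order on the players used to break all ties. Each player $i$ submits a value-bid $b_i\ge 0$ and a budget-bid $g_i\ge 0$; a mechanism outputs an injective partial slot assignment (assigned player $i$ gets slot $s(i)\in\{1,\dots,k\}$) and a price per click $p(i)\ge0$ for each assigned player; unassigned players pay nothing. The utility of player $i$ is $u_i=0$ if $i$ is unassigned, $u_i=\theta_{s(i)}(v_i-p(i))$ if $i$ is assigned and $\theta_{s(i)}p(i)\le B_i$, and $u_i=-\infty$ if $i$ is assigned and $\theta_{s(i)}p(i)>B_i$. A (pure) Nash equilibrium is a profile $(b_i,g_i)_{i}$ such that no player $i$ can strictly increase $u_i$ by unilaterally replacing $(b_i,g_i)$ with any other pair. BOSP: order the players by decreasing value-bid (ties broken by the priority order); for $j\le k$ the $j$-th player in this order gets slot $j$ and pays per click the value-bid of the $(j+1)$-th player in the order (0 if there is none); the remaining players are unassigned. Budget-bids are ignored. *)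

(* Defs.v *)
From Stdlib Require Import Reals List Arith Bool.
Import ListNotations.
Open Scope R_scope.

(* Players are 0, ..., n-1; slots are 1, ..., k; theta j is the CTR of slot j.
   The priority order is given by an injective rank function pr on players:
   player j has priority over player i iff (pr j < pr i)%nat. *)

Inductive util := NegInf | Fin (r : R).

Definition util_lt (x y : util) : Prop :=
  match x, y with
  | NegInf, Fin _ => True
  | Fin a, Fin b => a < b
  | _, _ => False
  end.

Definition beats (pr : nat -> nat) (b : nat -> R) (j i : nat) : bool :=
  if Rlt_dec (b i) (b j) then true
  else if Req_EM_T (b j) (b i) then Nat.ltb (pr j) (pr i) else false.

(* 0-based position of player i in the BOSP order *)
Definition pos (n : nat) (pr : nat -> nat) (b : nat -> R) (i : nat) : nat :=
  length (filter (fun j => andb (negb (Nat.eqb j i)) (beats pr b j i)) (seq 0 n)).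

(* price per click: value-bid of the next player in the order (0 if none) *)
Definition bosp_price (n : nat) (pr : nat -> nat) (b : nat -> R) (i : nat) : R :=
  fold_right Rplus 0
    (map (fun j => if Nat.eqb (pos n pr b j) (S (pos n pr b i)) then b j else 0)
         (seq 0 n)).

(* utility of player i under BOSP; player i gets slot (pos i + 1) if pos i < k.
   Budget-bids g are ignored by BOSP. *)
Definition bosp_util (k n : nat) (theta : nat -> R) (pr : nat -> nat)
    (v B : nat -> R) (b g : nat -> R) (i : nat) : util :=
  if Nat.ltb (pos n pr b i) k then
    let s := S (pos n pr b i) in
    let p := bosp_price n pr b i in
    if Rle_dec (theta s * p) (B i) then Fin (theta s * (v i - p)) else NegInf
  else Fin 0.

Definition upd (f : nat -> R) (i : nat) (x : R) : nat -> R :=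
  fun j => if Nat.eqb j i then x else f j.

Definition bosp_NE (k n : nat) (theta : nat -> R) (pr : nat -> nat)
    (v B : nat -> R) (b g : nat -> R) : Prop :=
  forall i b' g', (i < n)%nat -> 0 <= b' -> 0 <= g' ->
    ~ util_lt (bosp_util k n theta pr v B b g i)
              (bosp_util k n theta pr v B (upd b i b') (upd g i g') i).

(* Main.v *)
Require Import Defs.
From Stdlib Require Import Reals List Arith.
From Stdlib Require Import Lra Lia.
Open Scope R_scope.

Definition th (j : nat) : R := if Nat.eqb j 1 then 2 else 1.
Definition vv (i : nat) : R := 10.
Definition BB (i : nat) : R :=
  match i with 0%nat => 1 | 1%nat => 11/10 | _ => 12/10 end.

Ltac crush :=
  repeat (match goal with
  | H: context[Rlt_dec ?x ?y] |- _ =>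
      destruct (Rlt_dec x y); simpl in *; try (exfalso; lra)
  | H: context[Req_EM_T ?x ?y] |- _ =>
      destruct (Req_EM_T x y); simpl in *; try (exfalso; lra)
  | H: context[Rle_dec ?x ?y] |- _ =>
      destruct (Rle_dec x y); simpl in *; try (exfalso; lra)
  end); try (exfalso; lra); try tauto.

Lemma case0 (b : nat -> R) g : 0 <= b 0%nat -> 0 <= b 1%nat -> 0 <= b 2%nat ->
  b 1%nat < b 0%nat -> b 2%nat < b 1%nat -> ~ bosp_NE 2 3 th (fun i : nat => i) vv BB b g.
Proof.
  intros h0 h1 h2 c1 c2 H.
  pose proof (H 2%nat ((b 0%nat + b 1%nat)/2) 0 ltac:(lia) ltac:(lra) (Rle_refl 0)) as D0.
  pose proof (H 0%nat 0 0 ltac:(lia) ltac:(lra) (Rle_refl 0)) as D1.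
  clear H.
  unfold bosp_util, bosp_price, Defs.pos, beats, upd, th, vv, BB in *; simpl in *.
  crush.
Qed.

Lemma case1 (b : nat -> R) g : 0 <= b 0%nat -> 0 <= b 1%nat -> 0 <= b 2%nat ->
  b 1%nat < b 0%nat -> b 1%nat = b 2%nat -> ~ bosp_NE 2 3 th (fun i : nat => i) vv BB b g.
Proof.
  intros h0 h1 h2 c1 c2 H.
  pose proof (H 2%nat ((b 0%nat + b 1%nat)/2) 0 ltac:(lia) ltac:(lra) (Rle_refl 0)) as D0.
  pose proof (H 1%nat 0 0 ltac:(lia) ltac:(lra) (Rle_refl 0)) as D1.
  clear H.
  unfold bosp_util, bosp_price, Defs.pos, beats, upd, th, vv, BB in *; simpl in *.
  crush.
Qed.

Lemma case2 (b : nat -> R) g : 0 <= b 0%nat -> 0 <= b 1%nat -> 0 <= b 2%nat ->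
  b 0%nat = b 1%nat -> b 2%nat < b 1%nat -> ~ bosp_NE 2 3 th (fun i : nat => i) vv BB b g.
Proof.
  intros h0 h1 h2 c1 c2 H.
  pose proof (H 0%nat 0 0 ltac:(lia) ltac:(lra) (Rle_refl 0)) as D0.
  pose proof (H 2%nat (b 0%nat + b 1%nat + b 2%nat + 1) 0 ltac:(lia) ltac:(lra) (Rle_refl 0)) as D1.
  clear H.
  unfold bosp_util, bosp_price, Defs.pos, beats, upd, th, vv, BB in *; simpl in *.
  crush.
Qed.

Lemma case3 (b : nat -> R) g : 0 <= b 0%nat -> 0 <= b 1%nat -> 0 <= b 2%nat ->
  b 0%nat = b 1%nat -> b 1%nat = b 2%nat -> ~ bosp_NE 2 3 th (fun i : nat => i) vv BB b g.
Proof.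
  intros h0 h1 h2 c1 c2 H.
  pose proof (H 0%nat 0 0 ltac:(lia) ltac:(lra) (Rle_refl 0)) as D0.
  pose proof (H 2%nat (b 0%nat + b 1%nat + b 2%nat + 1) 0 ltac:(lia) ltac:(lra) (Rle_refl 0)) as D1.
  clear H.
  unfold bosp_util, bosp_price, Defs.pos, beats, upd, th, vv, BB in *; simpl in *.
  crush.
Qed.

Lemma case4 (b : nat -> R) g : 0 <= b 0%nat -> 0 <= b 1%nat -> 0 <= b 2%nat ->
  b 2%nat < b 0%nat -> b 1%nat < b 2%nat -> ~ bosp_NE 2 3 th (fun i : nat => i) vv BB b g.
Proof.
  intros h0 h1 h2 c1 c2 H.
  pose proof (H 1%nat ((b 0%nat + b 2%nat)/2) 0 ltac:(lia) ltac:(lra) (Rle_refl 0)) as D0.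
  pose proof (H 0%nat 0 0 ltac:(lia) ltac:(lra) (Rle_refl 0)) as D1.
  clear H.
  unfold bosp_util, bosp_price, Defs.pos, beats, upd, th, vv, BB in *; simpl in *.
  crush.
Qed.

Lemma case5 (b : nat -> R) g : 0 <= b 0%nat -> 0 <= b 1%nat -> 0 <= b 2%nat ->
  b 0%nat = b 2%nat -> b 1%nat < b 2%nat -> ~ bosp_NE 2 3 th (fun i : nat => i) vv BB b g.
Proof.
  intros h0 h1 h2 c1 c2 H.
  pose proof (H 0%nat 0 0 ltac:(lia) ltac:(lra) (Rle_refl 0)) as D0.
  pose proof (H 1%nat (b 0%nat + b 1%nat + b 2%nat + 1) 0 ltac:(lia) ltac:(lra) (Rle_refl 0)) as D1.
  clear H.
  unfold bosp_util, bosp_price, Defs.pos, beats, upd, th, vv, BB in *; simpl in *.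
  crush.
Qed.

Lemma case6 (b : nat -> R) g : 0 <= b 0%nat -> 0 <= b 1%nat -> 0 <= b 2%nat ->
  b 0%nat < b 1%nat -> b 2%nat < b 0%nat -> ~ bosp_NE 2 3 th (fun i : nat => i) vv BB b g.
Proof.
  intros h0 h1 h2 c1 c2 H.
  pose proof (H 2%nat ((b 0%nat + b 1%nat)/2) 0 ltac:(lia) ltac:(lra) (Rle_refl 0)) as D0.
  pose proof (H 1%nat 0 0 ltac:(lia) ltac:(lra) (Rle_refl 0)) as D1.
  clear H.
  unfold bosp_util, bosp_price, Defs.pos, beats, upd, th, vv, BB in *; simpl in *.
  crush.
Qed.

Lemma case7 (b : nat -> R) g : 0 <= b 0%nat -> 0 <= b 1%nat -> 0 <= b 2%nat ->
  b 0%nat < b 1%nat -> b 0%nat = b 2%nat -> ~ bosp_NE 2 3 th (fun i : nat => i) vv BB b g.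
Proof.
  intros h0 h1 h2 c1 c2 H.
  pose proof (H 2%nat ((b 0%nat + b 1%nat)/2) 0 ltac:(lia) ltac:(lra) (Rle_refl 0)) as D0.
  pose proof (H 0%nat 0 0 ltac:(lia) ltac:(lra) (Rle_refl 0)) as D1.
  clear H.
  unfold bosp_util, bosp_price, Defs.pos, beats, upd, th, vv, BB in *; simpl in *.
  crush.
Qed.

Lemma case8 (b : nat -> R) g : 0 <= b 0%nat -> 0 <= b 1%nat -> 0 <= b 2%nat ->
  b 2%nat < b 1%nat -> b 0%nat < b 2%nat -> ~ bosp_NE 2 3 th (fun i : nat => i) vv BB b g.
Proof.
  intros h0 h1 h2 c1 c2 H.
  pose proof (H 0%nat ((b 1%nat + b 2%nat)/2) 0 ltac:(lia) ltac:(lra) (Rle_refl 0)) as D0.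
  pose proof (H 1%nat 0 0 ltac:(lia) ltac:(lra) (Rle_refl 0)) as D1.
  clear H.
  unfold bosp_util, bosp_price, Defs.pos, beats, upd, th, vv, BB in *; simpl in *.
  crush.
Qed.

Lemma case9 (b : nat -> R) g : 0 <= b 0%nat -> 0 <= b 1%nat -> 0 <= b 2%nat ->
  b 1%nat = b 2%nat -> b 0%nat < b 2%nat -> ~ bosp_NE 2 3 th (fun i : nat => i) vv BB b g.
Proof.
  intros h0 h1 h2 c1 c2 H.
  pose proof (H 1%nat 0 0 ltac:(lia) ltac:(lra) (Rle_refl 0)) as D0.
  pose proof (H 2%nat (b 0%nat + b 1%nat + b 2%nat + 1) 0 ltac:(lia) ltac:(lra) (Rle_refl 0)) as D1.
  clear H.
  unfold bosp_util, bosp_price, Defs.pos, beats, upd, th, vv, BB in *; simpl in *.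
  crush.
Qed.

Lemma case10 (b : nat -> R) g : 0 <= b 0%nat -> 0 <= b 1%nat -> 0 <= b 2%nat ->
  b 0%nat < b 2%nat -> b 1%nat < b 0%nat -> ~ bosp_NE 2 3 th (fun i : nat => i) vv BB b g.
Proof.
  intros h0 h1 h2 c1 c2 H.
  pose proof (H 1%nat ((b 0%nat + b 2%nat)/2) 0 ltac:(lia) ltac:(lra) (Rle_refl 0)) as D0.
  pose proof (H 2%nat 0 0 ltac:(lia) ltac:(lra) (Rle_refl 0)) as D1.
  clear H.
  unfold bosp_util, bosp_price, Defs.pos, beats, upd, th, vv, BB in *; simpl in *.
  crush.
Qed.

Lemma case11 (b : nat -> R) g : 0 <= b 0%nat -> 0 <= b 1%nat -> 0 <= b 2%nat ->
  b 0%nat < b 2%nat -> b 0%nat = b 1%nat -> ~ bosp_NE 2 3 th (fun i : nat => i) vv BB b g.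
Proof.
  intros h0 h1 h2 c1 c2 H.
  pose proof (H 1%nat ((b 0%nat + b 2%nat)/2) 0 ltac:(lia) ltac:(lra) (Rle_refl 0)) as D0.
  pose proof (H 2%nat ((b 0%nat + b 1%nat)/2) 0 ltac:(lia) ltac:(lra) (Rle_refl 0)) as D1.
  clear H.
  unfold bosp_util, bosp_price, Defs.pos, beats, upd, th, vv, BB in *; simpl in *.
  crush.
Qed.

Lemma case12 (b : nat -> R) g : 0 <= b 0%nat -> 0 <= b 1%nat -> 0 <= b 2%nat ->
  b 1%nat < b 2%nat -> b 0%nat < b 1%nat -> ~ bosp_NE 2 3 th (fun i : nat => i) vv BB b g.
Proof.
  intros h0 h1 h2 c1 c2 H.
  pose proof (H 0%nat ((b 1%nat + b 2%nat)/2) 0 ltac:(lia) ltac:(lra) (Rle_refl 0)) as D0.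
  pose proof (H 2%nat 0 0 ltac:(lia) ltac:(lra) (Rle_refl 0)) as D1.
  clear H.
  unfold bosp_util, bosp_price, Defs.pos, beats, upd, th, vv, BB in *; simpl in *.
  crush.
Qed.

Lemma noNE (b : nat -> R) g : 0 <= b 0%nat -> 0 <= b 1%nat -> 0 <= b 2%nat ->
  ~ bosp_NE 2 3 th (fun i : nat => i) vv BB b g.
Proof.
  intros h0 h1 h2.
  destruct (Rtotal_order (b 0%nat) (b 1%nat)) as [a01|[a01|a01]];
  destruct (Rtotal_order (b 0%nat) (b 2%nat)) as [a02|[a02|a02]];
  destruct (Rtotal_order (b 1%nat) (b 2%nat)) as [a12|[a12|a12]];
  try (exfalso; lra).
  all: first
    [ apply case0; auto; lra | apply case1; auto; lra | apply case2; auto; lra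
    | apply case3; auto; lra | apply case4; auto; lra | apply case5; auto; lra
    | apply case6; auto; lra | apply case7; auto; lra | apply case8; auto; lra
    | apply case9; auto; lra | apply case10; auto; lra | apply case11; auto; lra
    | apply case12; auto; lra ].
Qed.

Theorem theorem1 :
  exists (k n : nat) (theta : nat -> R) (v B : nat -> R) (pr : nat -> nat),
    (1 <= k)%nat /\ (k <= n)%nat /\
    (forall j, (1 <= j)%nat -> (j < k)%nat -> theta (S j) < theta j) /\
    0 < theta k /\
    (forall i, (i < n)%nat -> 0 <= v i /\ 0 < B i) /\
    (forall i j, (i < n)%nat -> (j < n)%nat -> i <> j -> B i <> B j) /\
    (forall i j, (i < n)%nat -> (j < n)%nat -> pr i = pr j -> i = j) /\
    forall b g : nat -> R,
      (forall i, (i < n)%nat -> 0 <= b i /\ 0 <= g i) ->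
      ~ bosp_NE k n theta pr v B b g.
Proof.
  exists 2%nat, 3%nat, th, vv, BB, (fun i : nat => i).
  split; [lia|]. split; [lia|].
  split. { intros j h1 h2. assert (j = 1%nat) by lia. subst. unfold th; simpl; lra. }
  split. { unfold th; simpl; lra. }
  split. { intros i hi. unfold vv, BB.
           destruct i as [|[|i]]; simpl; lra. }
  split. { intros i j hi hj hij. unfold BB.
           destruct i as [|[|[|i]]]; destruct j as [|[|[|j]]];
             try lia; lra. }
  split. { intros i j _ _ e; exact e. }
  intros b g hb.
  apply noNE.
  - apply (hb 0%nat); lia.
  - apply (hb 1%nat); lia.
  - apply (hb 2%nat); lia.
Qed.
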